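(* Let $T$ be a discrete space, let $\alpha T=T\cup\{\infty\}$ be its Alexandroff (one-point) compactification, and let $f:\alpha T\to\mathbb R$ be a Baire one function. Then there exists a countable set $S\subseteq T$ such that $f$ is constant on $\alpha T\setminus S$.
   Context: In $\alpha T$ the points of $T$ are isolated and the neighbourhoods of $\infty$ are the sets $\alpha T\setminus E$ with $E\subseteq T$ finite. A function is Baire one if it is the pointwise limit of a sequence of continuous real functions. *)

(* Defs.v *)
From HB Require Import structures.
From mathcomp Require Import all_boot all_order all_algebra.
From mathcomp Require Import all_classical all_reals all_analysis.
Set Implicit Arguments. Unset Strict Implicit. Unset Printing Implicit Defensive.
Import Order.TTheory GRing.Theory Num.Theory.
Import numFieldNormedType.Exports.
Local Open Scope classical_set_scope.
Local Open Scope ring_scope.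

(* The Alexandroff compactification alpha T of a discrete space T is modelled
   by the type [option T]: [Some t] is the point t of T, [None] is infinity. *)

(* Open sets of alpha T: every subset is open at points of T (they are isolated);
   a set containing infinity is open iff it contains alpha T \ E for some finite
   E subset of T, i.e. iff its trace-complement in T is finite. *)
Definition alex_open (T : Type) (U : set (option T)) : Prop :=
  U None -> finite_set [set t : T | ~ U (Some t)].

Definition alex_continuous (T : Type) (R : realType) (g : option T -> R) : Prop :=
  forall V : set R, open V -> alex_open (g @^-1` V).

Definition alex_baire_one (T : Type) (R : realType) (f : option T -> R) : Prop :=
  exists g : nat -> option T -> R,
    (forall n, alex_continuous (g n)) /\
    (forall x, (fun n => g n x) @ \oo --> f x).

(* Main.v *)
Require Import Defs.
From mathcomp Require Import all_boot all_order all_algebra.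
From mathcomp Require Import all_classical all_reals all_analysis.
Import Order.TTheory GRing.Theory Num.Theory.
Import numFieldNormedType.Exports.
Local Open Scope classical_set_scope.
Local Open Scope ring_scope.

Theorem lemma3p1 (T : Type) (R : realType) (f : option T -> R) :
  alex_baire_one f ->
  exists S : set T, countable S /\
    (forall x y : option T,
       (forall t, x = Some t -> ~ S t) ->
       (forall t, y = Some t -> ~ S t) ->
       f x = f y).
Proof.
move=> [g [gc gf]].
pose F n k := [set t : T | ~ ball (g n None) (k.+1%:R^-1 : R) (g n (Some t))].
exists (\bigcup_(n in [set: nat]) \bigcup_(k in [set: nat]) F n k); split.
  apply: bigcup_countable => [|n _]; first exact: countableP.
  apply: bigcup_countable => [|k _]; first exact: countableP.
  apply: finite_set_countable.
  have := gc n (ball (g n None) (k.+1%:R^-1)) (ball_open _ _).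
  by apply => /=; apply: ballxx.
suff key : forall x, (forall t, x = Some t ->
    ~ (\bigcup_(n in [set: nat]) \bigcup_(k in [set: nat]) F n k) t) ->
    f x = f None.
  by move=> x y hx hy; rewrite (key x hx) (key y hy).
move=> x hx.
have eq : (fun n => g n x) = (fun n => g n None).
  apply: funext => n; case: x hx => [t|//] ht.
  apply: contrapT => /eqP hne.
  have hpos : 0 < `|g n (Some t) - g n None| by rewrite normr_gt0 subr_eq0.
  have [k hk] : exists k, k.+1%:R^-1 < `|g n (Some t) - g n None|.
    exists (Num.truncn (`|g n (Some t) - g n None|)^-1).
    by rewrite -ltf_pV2 ?(posrE,divr_gt0,invr_gt0)// invrK truncnS_gt.
  apply: (ht t erefl); exists n => //; exists k => //.
  rewrite /F /= -ball_normE /= distrC => hb.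
  by move: (lt_trans hb hk); rewrite ltxx.
have h1 := gf x; have h2 := gf None; rewrite -eq in h2.
rewrite -(cvg_lim _ h1)//; exact: cvg_lim h2.
Qed.
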